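(* Let $R$ be a $d\times d$ expansive integer matrix, $B\subset\mathbb{Z}^d$ finite with $0\in B$, $N:=|B|$, $L\subset\mathbb{Z}^d$ finite with $0\in L$, and $(\alpha_l)_{l\in L}$ nonzero complex numbers such that the matrix $\frac{1}{\sqrt N}\left(e^{2\pi i (R^T)^{-1}l\cdot b}\alpha_l\right)_{l\in L,b\in B}$ has orthonormal columns. Then: (i) $N\le\#[L]$; (ii) for every $l_0\in L$, $\sum_{l\in L,\ l\in[l_0]}|\alpha_l|^2\le1$.
   Context: For $k\in\mathbb{Z}^d$, $[k]:=\{k'\in\mathbb{Z}^d : (k'-k)\cdot R^{-1}b\in\mathbb{Z}\text{ for all }b\in B\}$, and $[L]:=\{[l]: l\in L\}$ is the set of distinct classes of elements of $L$; $\#[L]$ is its cardinality. A matrix is expansive if all eigenvalues have modulus $>1$. *)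

(* Defs.v *)
From HB Require Import structures.
From mathcomp Require Import all_boot all_order all_algebra.
From mathcomp Require Import finmap.
From mathcomp Require Import boolp reals trigo.
From mathcomp Require Import complex.

Set Implicit Arguments.
Unset Strict Implicit.
Unset Printing Implicit Defensive.

Import Order.TTheory GRing.Theory Num.Theory.
Local Open Scope ring_scope.

Definition ratmx d (R : 'M[int]_d) : 'M[rat]_d := map_mx (fun z : int => z%:~R) R.
Definition ratcv d (k : 'cV[int]_d) : 'cV[rat]_d := map_mx (fun z : int => z%:~R) k.

(* the rational number  k . R^{-1} b  (=  (R^T)^{-1} k . b) *)
Definition pairR d (R : 'M[int]_d) (k b : 'cV[int]_d) : rat :=
  ((ratcv k)^T *m invmx (ratmx R) *m ratcv b) ord0 ord0.

Definition e2pii (Rr : realType) (q : rat) : Rr[i] :=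
  Complex (cos (2 * pi * ratr q)) (sin (2 * pi * ratr q)).

Definition expansive (Rr : realType) d (R : 'M[int]_d) : Prop :=
  forall z : Rr[i], eigenvalue (map_mx (fun x : int => x%:~R) R) z -> 1 < `|z|.

Definition cls d (R : 'M[int]_d) (B : {fset 'cV[int]_d}) (k : 'cV[int]_d)
  : 'cV[int]_d -> bool :=
  fun k' => all (fun b => pairR R (k' - k) b \is a Num.int) B.

Definition classes d (R : 'M[int]_d) (B L : {fset 'cV[int]_d}) :=
  [fset cls R B l | l in L]%fset.

Definition Mentry (Rr : realType) d (R : 'M[int]_d) (B : {fset 'cV[int]_d})
  (alpha : 'cV[int]_d -> Rr[i]) (l b : 'cV[int]_d) : Rr[i] :=
  (sqrtC (#|` B|%:R : Rr[i]))^-1 * e2pii Rr (pairR R l b) * alpha l.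

(* Main.v *)
Require Import Defs.
From HB Require Import structures.
From mathcomp Require Import all_boot all_order all_algebra.
From mathcomp Require Import finmap.
From mathcomp Require Import boolp reals trigo.
From mathcomp Require Import complex.
From mathcomp Require Import ring.
Import Order.TTheory GRing.Theory Num.Theory.
Local Open Scope ring_scope.

Lemma e2pii_conj (Rr : realType) q : (e2pii Rr q)^* * e2pii Rr q = 1.
Proof.
rewrite /e2pii; set x := 2 * pi * _.
apply/eqP; rewrite eq_complex /= mulNr opprK -!expr2 cos2Dsin2 eqxx /=.
by rewrite mulNr [sin x * _]mulrC subrr.
Qed.

Lemma e2pii_shift (Rr : realType) q q' : (q' - q) \is a Num.int ->
  e2pii Rr q' = e2pii Rr q.
Proof.
move=> /intrP [m hm].
have -> : q' = q + m%:~R by rewrite -hm addrC subrK.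
rewrite /e2pii rmorphD /= ratr_int mulrDr.
have per : forall f : Rr -> Rr, periodic f (pi *+ 2) ->
   f (2 * pi * ratr q + 2 * pi * m%:~R) = f (2 * pi * ratr q).
  move=> f hf; have -> : 2 * pi * (m%:~R : Rr) = (pi *+ 2) *~ m.
    by rewrite mulrzr mulr_natl.
  case: m {hm} => n; first by rewrite -pmulrn periodicn.
  rewrite NegzE mulrNz -pmulrn.
  set a := 2 * pi * ratr q.
  by rewrite -{2}(subrK ((pi *+ 2) *+ n.+1) a) (periodicn hf).
by rewrite (per _ (@cosD2pi Rr)) (per _ (@sinD2pi Rr)).
Qed.

Lemma ratcvB d (k k' : 'cV[int]_d) : ratcv (k - k') = ratcv k - ratcv k'.
Proof. by apply/matrixP => i j; rewrite !mxE intrB. Qed.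

Lemma pairRB d (R : 'M[int]_d) k k' b :
  pairR R (k - k') b = pairR R k b - pairR R k' b.
Proof. rewrite /pairR ratcvB linearB /= !mulmxBl. by rewrite mxE [in X in _ + X = _]mxE. Qed.

Lemma pairR0 d (R : 'M[int]_d) b : pairR R 0 b = 0.
Proof. by rewrite -(subrr 0) pairRB subrr. Qed.

Lemma clsP d (R : 'M[int]_d) B k k' :
  reflect (forall b, b \in B -> pairR R k' b - pairR R k b \is a Num.int)
    (cls R B k k').
Proof.
apply: (iffP allP) => h b hb; first by rewrite -pairRB; apply: h.
by rewrite pairRB; apply: h.
Qed.

Lemma cls_refl d (R : 'M[int]_d) B l : cls R B l l.
Proof. by apply/clsP => b _; rewrite subrr. Qed.

Lemma cls_eq d (R : 'M[int]_d) B l0 l : cls R B l0 l -> cls R B l = cls R B l0.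
Proof.
move=> /clsP h; apply: funext => k; apply/clsP/clsP => h2 b hb.
  have -> : pairR R k b - pairR R l0 b =
     (pairR R k b - pairR R l b) + (pairR R l b - pairR R l0 b) by rewrite addrA subrK.
  by rewrite rpredD ?h ?h2.
have -> : pairR R k b - pairR R l b =
   (pairR R k b - pairR R l0 b) - (pairR R l b - pairR R l0 b).
  by rewrite opprB addrA subrK.
by rewrite rpredB ?h ?h2.
Qed.

Lemma cls_eqE d (R : 'M[int]_d) B l0 l : (cls R B l == cls R B l0) = cls R B l0 l.
Proof.
apply/eqP/idP => [<-|]; first exact: cls_refl.
exact: cls_eq.
Qed.

Lemma partition_sum (T : choiceType) (K : choiceType) (V : nmodType)
  (g : T -> K) (L : {fset T}) (F : T -> V) :
  \sum_(l <- L) F l = \sum_(C <- [fset g l | l in L]%fset) \sum_(l <- L | g l == C) F l.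
Proof.
under [RHS]eq_bigr do rewrite big_mkcond.
rewrite exchange_big /=; apply: eq_big_seq => l hl.
have hC : g l \in [fset g l | l in L]%fset by apply: in_imfset.
rewrite (bigD1_seq _ hC (fset_uniq _)) /= eqxx big1 ?addr0 // => C hC'.
by rewrite eq_sym (negbTE hC').
Qed.

Theorem proposition3p9 (Rr : realType) (d : nat) (R : 'M[int]_d)
  (B L : {fset 'cV[int]_d}) (alpha : 'cV[int]_d -> Rr[i]) :
  expansive Rr R ->
  (0 : 'cV[int]_d) \in B ->
  (0 : 'cV[int]_d) \in L ->
  (forall l, l \in L -> alpha l != 0) ->
  (forall b b', b \in B -> b' \in B ->
     \sum_(l <- L) Num.conj (Mentry R B alpha l b) * Mentry R B alpha l b'
       = (b == b')%:R) ->
  (#|` B| <= #|` classes R B L|)%N /\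
  (forall l0, l0 \in L ->
     \sum_(l <- L | cls R B l0 l) `|alpha l| ^+ 2 <= 1).
Proof.
move=> _ B0 _ _ orth.
set N := #|` B|.
have Npos : (0 < N)%N by rewrite cardfs_gt0; apply/fset0Pn; exists 0.
have N0 : (N%:R : Rr[i]) != 0 by rewrite pnatr_eq0 -lt0n.
set s := sqrtC (N%:R : Rr[i]).
have sge0 : 0 <= s by rewrite sqrtC_ge0 ler0n.
have sc : s^* = s by rewrite geC0_conj.
have ss : s * s = N%:R by rewrite -expr2 sqrtCK.
have s0 : s != 0 by apply: contra N0 => /eqP s0; rewrite -ss s0 mul0r.
have cc : s^-1 * s^-1 = N%:R^-1 by rewrite -invfM ss.
have ccc : (s^-1)^* = s^-1.
  by rewrite geC0_conj // invr_ge0.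
set E := fun l b => e2pii Rr (pairR R l b).
have EC : forall l b, (E l b)^* * E l b = 1 by move=> l b; apply: e2pii_conj.
have ME : forall l b, Mentry R B alpha l b = s^-1 * E l b * alpha l by [].
have MM : forall l b b', (Mentry R B alpha l b)^* * Mentry R B alpha l b' =
   N%:R^-1 * ((E l b)^* * E l b') * ((alpha l)^* * alpha l).
  move=> l b b'; rewrite !ME !rmorphM /= ccc -cc.
  ring.
have nrm : forall l, `|alpha l| ^+ 2 = (alpha l)^* * alpha l by move=> l; rewrite normCKC.
have tot : \sum_(l <- L) `|alpha l| ^+ 2 = N%:R.
  have := orth 0 0 B0 B0; rewrite eqxx.
  under eq_bigr do rewrite MM EC mulr1 -nrm.
  rewrite -mulr_sumr => /(congr1 (fun x => N%:R * x)).
  by rewrite mulr1 mulrA mulfV // mul1r.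
have part2 : forall l0, l0 \in L ->
     \sum_(l <- L | cls R B l0 l) `|alpha l| ^+ 2 <= 1.
  move=> l0 _.
  set w := fun b => s^-1 * (E l0 b)^*.
  set v := fun l => \sum_(b <- B) Mentry R B alpha l b * w b.
  have sumB : \sum_(b <- B) (1 : Rr[i]) = N%:R by rewrite /N card_fset_sum1 natr_sum.
  have vv : \sum_(l <- L) (v l)^* * v l = 1.
    rewrite /v.
    transitivity (\sum_(l <- L) \sum_(b <- B) \sum_(b' <- B)
       ((w b)^* * w b') * ((Mentry R B alpha l b)^* * Mentry R B alpha l b')).
      apply: eq_bigr => l _; rewrite rmorph_sum big_distrl /=.
      apply: eq_bigr => b _; rewrite big_distrr /=.
      by apply: eq_bigr => b' _; rewrite rmorphM /=; ring.
    rewrite exchange_big /=.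
    transitivity (\sum_(b <- B) \sum_(b' <- B) (w b)^* * w b' * (b == b')%:R).
      rewrite big_seq [RHS]big_seq; apply: eq_bigr => b hb.
      rewrite exchange_big /= big_seq [RHS]big_seq; apply: eq_bigr => b' hb'.
      by rewrite -mulr_sumr orth.
    transitivity (\sum_(b <- B) (1 : Rr[i]) * N%:R^-1).
      rewrite big_seq [RHS]big_seq; apply: eq_bigr => b hb.
      rewrite (bigD1_seq b hb (fset_uniq B)) /= eqxx mulr1 big1 ?addr0; last first.
        by move=> b' hb'; rewrite eq_sym (negbTE hb') mulr0.
      rewrite /w rmorphM /= ccc conjCK.
      transitivity (s^-1 * s^-1 * ((E l0 b)^* * E l0 b)); first by ring.
      by rewrite EC mulr1 mul1r cc.
    by rewrite -mulr_suml sumB mulfV.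
  have va : forall l, cls R B l0 l -> v l = alpha l.
    move=> l hcl; rewrite /v big_seq (eq_bigr (fun _ => 1 * (N%:R^-1 * alpha l))).
      by rewrite -big_seq -mulr_suml sumB mulrA mulfV // mul1r.
    move=> b hb; rewrite ME.
    have -> : E l b = E l0 b by apply: e2pii_shift; move/clsP: hcl; apply.
    rewrite /w.
    transitivity (s^-1 * s^-1 * alpha l * ((E l0 b)^* * E l0 b)); first by ring.
    by rewrite EC mulr1 mul1r cc.
  rewrite -vv [X in _ <= X](bigID (cls R B l0)) /= -[X in X <= _]addr0 lerD //.
    by rewrite le_eqVlt; apply/orP; left; apply/eqP; apply: eq_bigr => l hl; rewrite va // nrm.
  by apply: sumr_ge0 => l _; rewrite -normCKC exprn_ge0.
split=> //.
rewrite -(ler_nat (Rr[i])) -/N -tot (@partition_sum _ _ _ (cls R B)) card_fset_sum1 natr_sum.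
rewrite big_seq [X in _ <= X]big_seq; apply: ler_sum => C /imfsetP [l0 hl0 ->].
rewrite (eq_bigl (cls R B l0)); first exact: part2.
by move=> l; rewrite cls_eqE.
Qed.
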